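(* Let $k\ge 1$, $h=3k+1$, and $W\in\mathcal W^2_{h\times 3}$. Let $\ell$ be the number of maximal vertical pillars in the middle column $W^t[2]$. Then $$e(W^t[1])+e(W^t[3])\le 2\big(-k-1/3+\ell-e(W^t[2])\big).$$
   Context: A 2-dimensional binary word of dimensions $h\times w$ is an $h\times w$ matrix with entries in $\{\square,\blacksquare\}$ (filled cells $\blacksquare$, empty cells $\square$); $|U|_\blacksquare$ is the number of filled cells of $U$. Two cells $(i,j),(i',j')$ are adjacent if $|i-i'|+|j-j'|=1$; the degree of a filled cell is the number of filled cells adjacent to it. $\mathcal W^2_{h\times w}$ is the set of $h\times w$ binary words in which every filled cell has degree at most $2$. $W^t[j]$ denotes column $j$ of $W$, viewed as an $h\times 1$ word. The excess of an $a\times b$ word $U$ is $e(U)=|U|_\blacksquare-2ab/3$; for a column of height $h$, $e=|\text{column}|_\blacksquare-2h/3$. A maximal vertical pillar in a column is a maximal run of consecutive filled cells in that column (not contained in a longer run of consecutive filled cells of that column). *)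

(* Defs.v *)
(* Binary words h x w are matrices 'M[bool]_(h,w); true = filled cell. *)
From mathcomp Require Import all_boot all_order all_algebra.
Set Implicit Arguments. Unset Strict Implicit. Unset Printing Implicit Defensive.
Import Order.TTheory GRing.Theory Num.Theory.

Definition nfilled (a b : nat) (U : 'M[bool]_(a, b)) : nat :=
  #|[set p : 'I_a * 'I_b | U p.1 p.2]|.

Definition excess (a b : nat) (U : 'M[bool]_(a, b)) : rat :=
  ((nfilled U)%:R - 2%:R * (a * b)%:R / 3%:R)%R.

Definition absdiff (m n : nat) : nat := (m - n) + (n - m).

Definition adjacent (h w : nat) (p q : 'I_h * 'I_w) : bool :=
  absdiff p.1 q.1 + absdiff p.2 q.2 == 1.

Definition degree (h w : nat) (W : 'M[bool]_(h, w)) (p : 'I_h * 'I_w) : nat :=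
  #|[set q : 'I_h * 'I_w | adjacent p q && W q.1 q.2]|.

Definition inW2 (h w : nat) (W : 'M[bool]_(h, w)) : bool :=
  [forall p : 'I_h * 'I_w, W p.1 p.2 ==> (degree W p <= 2)].

(* cell i (as a natural number) of a column word c is filled; false out of range *)
Definition filled_at (h : nat) (c : 'M[bool]_(h, 1)) (i : nat) : bool :=
  [exists r : 'I_h, (nat_of_ord r == i) && c r ord0].

Definition max_pillar (h : nat) (c : 'M[bool]_(h, 1)) (a b : 'I_h) : bool :=
  [&& a <= b,
      [forall i : 'I_h, ((a <= i) && (i <= b)) ==> c i ord0],
      (a == 0 :> nat) || ~~ filled_at c a.-1
    & ~~ filled_at c b.+1].

Definition num_pillars (h : nat) (c : 'M[bool]_(h, 1)) : nat :=
  #|[set ab : 'I_h * 'I_h | max_pillar c ab.1 ab.2]|.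

(* Main.v *)
Require Import Defs.
From mathcomp Require Import all_boot all_order all_algebra zify lra.
Import Order.TTheory GRing.Theory Num.Theory.

Lemma count4 (T:finType) (A:{set T}) (b1 b2 b3 b4:bool) (x1 x2 x3 x4:T):
 (b1 -> x1 \in A) -> (b2 -> x2 \in A) -> (b3 -> x3 \in A) -> (b4 -> x4 \in A) ->
 x1 != x2 -> x1 != x3 -> x1 != x4 -> x2 != x3 -> x2 != x4 -> (b3 && b4 -> x3 != x4) ->
 (b1 + b2 + b3 + b4 <= #|A|)%N.
Proof.
move=> H1 H2 H3 H4 n12 n13 n14 n23 n24 n34.
have key : forall s, uniq s -> {subset s <= A} -> (size s <= #|A|)%N.
  by move=> s us sA; rewrite -(card_uniqP us); apply subset_leq_card; apply/subsetP.
have sub: forall (b : bool) y, (b -> y \in A) -> {subset (if b then [::y] else [::]) <= A}.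
  by move=> [] y H x //; rewrite inE => /eqP->; apply H.
have subc: forall s1 s2, {subset s1 <= A} -> {subset s2 <= A} -> {subset s1 ++ s2 <= A}.
  by move=> s1 s2 S1 S2 x; rewrite mem_cat => /orP[/S1|/S2].
have := key ((if b1 then [::x1] else [::]) ++ (if b2 then [::x2] else [::]) ++
  (if b3 then [::x3] else [::]) ++ (if b4 then [::x4] else [::])).
move=> /(_ _ (subc _ _ (sub _ _ H1) (subc _ _ (sub _ _ H2) (subc _ _ (sub _ _ H3) (sub _ _ H4))))).
case: b1 b2 b3 b4 {H1 H2 H3 H4} n34 => [] [] [] [] n34 /=; apply;
   rewrite /= ?inE ?negb_or ?n12 ?n13 ?n14 ?n23 ?n24 ?(n34 isT) //.
Qed.

Lemma filled_atE m (c : 'M[bool]_(m.+1,1)) i :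
  filled_at c i = (i < m.+1) && c (inord i) ord0.
Proof.
apply/existsP/andP => [[r /andP[/eqP <- cr]]|[lt ci]].
  by split; [apply: ltn_ord | rewrite inord_val].
by exists (inord i); rewrite inordK // eqxx.
Qed.

Lemma nfilled_sum n (c : 'M[bool]_(n,1)) :
  nfilled c = (\sum_(i < n) (c i ord0 : nat))%N.
Proof.
rewrite /nfilled -sum1_card big_mkcond /=.
transitivity (\sum_(p : 'I_n * 'I_1) (c p.1 p.2 : nat))%N.
  by apply: eq_bigr => p _; rewrite inE; case: (c p.1 p.2).
symmetry; rewrite (eq_bigr (fun i => \sum_(j < 1) (c i j : nat))%N); last first.
  by move=> i _; rewrite big_ord1.
by rewrite pair_bigA.
Qed.

Lemma nfilled_nat m (c : 'M[bool]_(m.+1,1)) :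
  nfilled c = (\sum_(0 <= i < m.+1) (filled_at c i : nat))%N.
Proof.
rewrite nfilled_sum big_mkord; apply: eq_bigr => i _.
by rewrite filled_atE ltn_ord inord_val.
Qed.

Lemma pillar_start m (c : 'M[bool]_(m.+1,1)) t : forall b : 'I_m.+1, nat_of_ord b = t ->
  c b ord0 -> exists a : 'I_m.+1, [&& a <= b,
      [forall i : 'I_m.+1, ((a <= i) && (i <= b)) ==> c i ord0]
    & (a == 0 :> nat) || ~~ filled_at c a.-1].
Proof.
elim: t => [|t IH] b bt cb.
  exists b; apply/and3P; split => //; last by rewrite bt.
  apply/forallP => i; apply/implyP.
  by move=> /andP[H1 H2]; have -> : i = b by apply: val_inj => /=; lia.
have tlt : t < m.+1 by have := ltn_ord b; lia.
case ft: (filled_at c t).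
  have cT : c (Ordinal tlt) ord0.
    by move: ft; rewrite filled_atE tlt /= => H; rewrite -[Ordinal _]inord_val.
  have [a /and3P[ab Hf Ha]] := IH (Ordinal tlt) erefl cT.
  exists a; rewrite Ha andbT /=; apply/andP; split; first by move: ab; rewrite /= bt; lia.
  apply/forallP => i; apply/implyP => /andP[H1 H2].
  case: (ltnP i b) => H3.
    by move/forallP: Hf => /(_ i) /implyP; apply; rewrite H1 /=; lia.
  by have -> : i = b by apply: val_inj => /=; lia.
exists b; apply/and3P; split => //; last by rewrite bt /= ft.
apply/forallP => i; apply/implyP.
by move=> /andP[H1 H2]; have -> : i = b by apply: val_inj => /=; lia.
Qed.

Lemma pillars_ge m (c : 'M[bool]_(m.+1,1)) :
  (\sum_(0 <= i < m.+1) (filled_at c i && ~~ filled_at c i.+1 : nat) <= num_pillars c)%N.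
Proof.
rewrite big_mkord.
set E := [set b : 'I_m.+1 | filled_at c b && ~~ filled_at c b.+1].
have -> : (\sum_(i < m.+1) (filled_at c i && ~~ filled_at c i.+1 : nat))%N = #|E|.
  rewrite -sum1_card [RHS]big_mkcond; apply: eq_bigr => i _; rewrite inE.
  by case: (_ && _).
apply: leq_trans (leq_imset_card (fun ab : 'I_m.+1 * 'I_m.+1 => ab.2) _).
apply: subset_leq_card; apply/subsetP => b; rewrite inE => /andP[fb nfb].
have cb: c b ord0 by move: fb; rewrite filled_atE inord_val ltn_ord.
have [a /and3P[H1 H2 H3]] := @pillar_start _ _ _ b erefl cb.
by apply/imsetP; exists (a,b) => //; rewrite inE /max_pillar /= H1 H2 H3 nfb.
Qed.

Lemma row_bound m (W : 'M[bool]_(m.+1,3)) i L M R : inW2 W -> i < m.+1 ->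
  L = filled_at (col (inord 0 : 'I_3) W) ->
  M = filled_at (col (inord 1 : 'I_3) W) ->
  R = filled_at (col (inord 2 : 'I_3) W) ->
  (L i + R i + (M i && M i.+1) + (M i && (0 < i) && M i.-1) <= 2)%N.
Proof.
move=> HW lti eL eM eR.
case Mi: (M i); last by rewrite /=; case: (L i); case: (R i).
rewrite /=.
set j0 := (inord 0 : 'I_3); set j1 := (inord 1 : 'I_3); set j2 := (inord 2 : 'I_3).
have v0 : nat_of_ord j0 = 0 by rewrite inordK.
have v1 : nat_of_ord j1 = 1 by rewrite inordK.
have v2 : nat_of_ord j2 = 2 by rewrite inordK.
have vi : nat_of_ord (inord i : 'I_m.+1) = i by rewrite inordK.
have Wi : W (inord i) j1 by move: Mi; rewrite eM filled_atE lti /= mxE.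
have := forallP HW (inord i, j1); rewrite /= Wi /= => deg.
apply: leq_trans deg; rewrite /degree.
have adjE : forall p q : 'I_m.+1 * 'I_3, adjacent p q = (absdiff p.1 q.1 + absdiff p.2 q.2 == 1)%N by [].
apply: (@count4 _ _ _ _ _ _ (inord i, j0) (inord i, j2) (inord i.+1, j1) (inord i.-1, j1)).
- rewrite eL filled_atE lti /= mxE -/j0 -/j1 -/j2 => H; rewrite inE adjE /= H andbT vi v1 v0 /absdiff; apply/eqP; lia.
- rewrite eR filled_atE lti /= mxE -/j0 -/j1 -/j2 => H; rewrite inE adjE /= H andbT vi v1 v2 /absdiff; apply/eqP; lia.
- rewrite eM filled_atE /= mxE -/j0 -/j1 -/j2 => /andP[lt H]; rewrite inE adjE /= H andbT vi v1 inordK // /absdiff; apply/eqP; lia.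
- move=> /andP[ip]; rewrite eM filled_atE /= mxE -/j0 -/j1 -/j2 => /andP[lt H].
  rewrite inE adjE /= H andbT vi v1 inordK // /absdiff; apply/eqP; lia.
- by rewrite xpair_eqE -[j0 == j2]val_eqE /= v0 v2 andbF.
- by rewrite xpair_eqE -[j0 == j1]val_eqE /= v0 v1 andbF.
- by rewrite xpair_eqE -[j0 == j1]val_eqE /= v0 v1 andbF.
- by rewrite xpair_eqE -[j2 == j1]val_eqE /= v2 v1 andbF.
- by rewrite xpair_eqE -[j2 == j1]val_eqE /= v2 v1 andbF.
- move=> /andP[Mi1 /andP[ip _]].
  move: Mi1; rewrite eM filled_atE => /andP[lt _].
  rewrite xpair_eqE -val_eqE /= !inordK //; [apply/negP => /andP[/eqP H _]; lia | lia].
Qed.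

Lemma key m (W : 'M[bool]_(m.+1,3)) : inW2 W ->
 (nfilled (col (inord 0 : 'I_3) W) + nfilled (col (inord 2 : 'I_3) W)
   + 2 * nfilled (col (inord 1 : 'I_3) W)
  <= 2 * m.+1 + 2 * num_pillars (col (inord 1 : 'I_3) W))%N.
Proof.
move=> HW.
set L := filled_at (col (inord 0 : 'I_3) W).
set M := filled_at (col (inord 1 : 'I_3) W).
set R := filled_at (col (inord 2 : 'I_3) W).
have pil := pillars_ge m (col (inord 1 : 'I_3) W).
rewrite !nfilled_nat -/L -/M -/R.
rewrite -/M in pil.
have sp : (\sum_(0 <= i < m.+1) (M i : nat) = \sum_(0 <= i < m.+1) (M i && M i.+1 : nat)
   + \sum_(0 <= i < m.+1) (M i && ~~ M i.+1 : nat))%N.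
  by rewrite -big_split; apply: eq_bigr => i _; case: (M i); case: (M i.+1).
have Mout : M m.+1 = false by rewrite /M filled_atE ltnn.
have up : (\sum_(0 <= i < m.+1) (M i && (0 < i) && M i.-1 : nat)
   = \sum_(0 <= i < m.+1) (M i && M i.+1 : nat))%N.
  rewrite big_nat_recl // big_nat_recr //= Mout andbF addn0 /=.
  rewrite ltnn andbF /= add0n.
  by apply: eq_bigr => i _; rewrite andbT andbC.
have rows : (\sum_(0 <= i < m.+1) (L i + R i + (M i && M i.+1) + (M i && (0 < i) && M i.-1))
   <= 2 * m.+1)%N.
  rewrite big_mkord.
  apply: (@leq_trans (\sum_(i < m.+1) 2)%N).
    by apply: leq_sum => i _; exact: (@row_bound m W i L M R HW (ltn_ord i) erefl erefl erefl).
  by rewrite sum_nat_const card_ord mulnC.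
rewrite !big_split /= up in rows.
lia.
Qed.

Theorem mainTheorem11 (k : nat) (hk : (1 <= k)%N) (W : 'M[bool]_(3 * k + 1, 3)) :
  inW2 W ->
  (excess (col (inord 0 : 'I_3) W) + excess (col (inord 2 : 'I_3) W)
   <= 2%:R * (- (k%:R) - 1%:R / 3%:R
              + (num_pillars (col (inord 1 : 'I_3) W))%:R
              - excess (col (inord 1 : 'I_3) W)) :> rat)%R.
Proof.
move: W; rewrite addn1 => W HW.
have := @key (3*k) W HW.
rewrite /excess.
set a := nfilled (col _ W); set c := nfilled (col _ W); set b := nfilled (col _ W); set l := num_pillars _.
move=> H.
move: H; rewrite -(ler_nat rat) !natrD !natrM => H'.
rewrite -[(3 * k).+1]addn1 ?natrD ?natrM in H' *. lra.
Qed.
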